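(* Let $r\ge 3$, $t\ge 2$, and let $G$ be a connected simple $(r+1)$-regular graph with $N$ vertices and girth at least $t+1$. Let $\mathcal{C}$ be the binary code whose parity-check matrix is the vertex–edge incidence matrix of $G$ over $\mathbb{F}_2$ (an $(n,k,r,t)_{\mathrm{seq}}$ code with $n=N(r+1)/2$). Then $\mathcal{C}$ attains equality in the rate bound, i.e. $\frac{k}{n}=\frac{r^{s+1}}{r^{s+1}+2\sum_{i=0}^{s}r^i}$ for $t$ even and $\frac{k}{n}=\frac{r^{s+1}}{r^{s+1}+2\sum_{i=1}^{s}r^i+1}$ for $t$ odd, where $s=\lfloor(t-1)/2\rfloor$, if and only if $G$ is a Moore graph.
   Context: For integers $r\ge1$, $t\ge2$ define $N_{r,t}=1+\sum_{i=0}^{s}(r+1)r^i$ if $t=2s+2$ is even and $N_{r,t}=2\sum_{i=0}^{s}r^i$ if $t=2s+1$ is odd. A Moore graph (for $r,t$) is an $(r+1)$-regular graph of girth at least $t+1$ with exactly $N_{r,t}$ vertices. An $(n,k,r,t)_{\mathrm{seq}}$ code is an $[n,k]$ linear code $\mathcal{C}\subseteq\mathbb{F}_q^n$ such that for every $E\subseteq[n]$ with $1\le|E|=u\le t$ there is an ordering $\ell_1,\dots,\ell_u$ of $E$ and sets $R_j\subseteq[n]$, $|R_j|\le r$, $R_j\cap\{\ell_j,\dots,\ell_u\}=\emptyset$, with coefficients $a_{j,i}$ such that $c_{\ell_j}=\sum_{i\in R_j}a_{j,i}c_i$ for all $c\in\mathcal{C}$. *)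

(* Defs.v *)
From HB Require Import structures.
From mathcomp Require Import all_boot all_order all_algebra.
Set Implicit Arguments. Unset Strict Implicit. Unset Printing Implicit Defensive.
Import GRing.Theory Num.Theory.

Section Graphs.
Variables (V : finType) (adj : rel V).

(* simple graph: adj symmetric and irreflexive (hypotheses of the theorem) *)
Definition connected_graph : Prop := forall x y : V, connect adj x y.

Definition regular_graph (d : nat) : Prop :=
  forall x : V, #|[set y | adj x y]| = d.

Definition is_cycle (p : seq V) : bool := [&& uniq p, 3 <= size p & cycle adj p].

Definition girth_ge (g : nat) : Prop :=
  forall p : seq V, is_cycle p -> g <= size p.

Definition edges : {set {set V}} :=
  [set e : {set V} | [exists x, exists y, adj x y && (e == [set x; y])]].

Definition incidence : 'M['F_2]_(#|V|, #|edges|) :=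
  \matrix_(i < #|V|, j < #|edges|) (((enum_val i \in enum_val j) : nat)%:R)%R.

(* the code C = {c in F_2^n | H c^T = 0}, as the row space of kermx H^T *)
Definition code_length : nat := #|edges|.
Definition code_dim : nat := \rank (kermx (incidence^T)).
End Graphs.

Definition moore_number (r t : nat) : nat :=
  let s := (t - 1) %/ 2 in
  if odd t then 2 * \sum_(0 <= i < s.+1) r ^ i
  else 1 + \sum_(0 <= i < s.+1) (r + 1) * r ^ i.

Definition moore_graph (V : finType) (adj : rel V) (r t : nat) : Prop :=
  regular_graph adj r.+1 /\ girth_ge adj t.+1 /\ #|V| = moore_number r t.

Definition rate_bound (r t : nat) : rat :=
  let s := ((t - 1) %/ 2)%N in
  let num : rat := ((r ^ s.+1)%N%:R)%R in
  if odd t then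
    (num / (num + 2%:R * (\sum_(1 <= i < s.+1) r ^ i)%N%:R + 1))%R
  else
    (num / (num + 2%:R * (\sum_(0 <= i < s.+1) r ^ i)%N%:R))%R.

(* Main.v *)
Require Import Defs.
From HB Require Import structures.
From mathcomp Require Import all_boot all_order all_algebra.
From mathcomp Require Import ring lra zify.
Import GRing.Theory Num.Theory.

Lemma geom (r s : nat) :
  ((\sum_(0 <= i < s.+1) r ^ i) * r + 1 = \sum_(0 <= i < s.+1) r ^ i + r ^ s.+1)%N.
Proof.
elim: s => [|s IH]; first by rewrite big_nat1 expn0 expn1 mul1n addnC.
by rewrite big_nat_recr //= expnSr mulnDl -addnA [(_ * r + 1)%N]addnC addnA IH !expnSr.

Qed.

Local Open Scope ring_scope.

Lemma rate_bound_eq (r t : nat) : (1 <= r)%N ->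
  rate_bound r t = ((moore_number r t)%:R * (r%:R - 1) + 2) /
                   ((moore_number r t)%:R * (r%:R + 1)) :> rat.
Proof.
move=> Hr.
rewrite /rate_bound /moore_number.
set s := ((t - 1) %/ 2)%N.
have G := geom r s.
set S := (\sum_(0 <= i < s.+1) r ^ i)%N in G *.
have HS : (1 <= S)%N by rewrite /S big_nat_recl // leq_addr.
set p := (r ^ s.+1)%N in G *.
have Gq : (p%:R : rat) = S%:R * r%:R + 1 - S%:R.
  have Gn : (p%:R + S%:R = S%:R * r%:R + 1 :> rat).
    by rewrite -natrM -natrD -(natrD _ _ 1) G addnC.
  rewrite -Gn; ring.
have Sq : (1 <= S%:R :> rat) by rewrite ler1n.
have rq : (1 <= r%:R :> rat) by rewrite ler1n.
case: ifP => _.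
- have HT : (\sum_(1 <= i < s.+1) r ^ i = S - 1)%N.
    by rewrite /S [in RHS]big_ltn // expn0 addnC addnK.
  rewrite HT natrB // natrM.
  apply/eqP; rewrite eqr_div; last first.
  + rewrite mulf_neq0 //; apply/lt0r_neq0; lra.
  + apply/lt0r_neq0; rewrite Gq; nra.
  apply/eqP; rewrite Gq; ring.
- rewrite -big_distrr /= natrD natrM.
  apply/eqP; rewrite eqr_div; last first.
  + rewrite mulf_neq0 //; apply/lt0r_neq0; nra.
  + apply/lt0r_neq0; rewrite Gq; nra.
  apply/eqP; rewrite Gq; ring.
Qed.
Section G.
Variables (V : finType) (adj : rel V).
Hypotheses (Hsym : symmetric adj) (Hirr : irreflexive adj).

Lemma in_edges e : (e \in edges adj) = [exists x, exists y, adj x y && (e == [set x; y])].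
Proof. by rewrite inE. Qed.

Lemma edge_card2 e : e \in edges adj -> #|e| = 2.
Proof.
rewrite in_edges => /existsP[x /existsP[y /andP[Axy /eqP ->]]].
rewrite cards2; case: eqP => // exy; by rewrite exy Hirr in Axy.
Qed.

Lemma card_inc (v : V) :
  #|[pred e | (e \in edges adj) && (v \in e)]| = #|[set y | adj v y]|.
Proof.
have -> : #|[pred e | (e \in edges adj) && (v \in e)]| =
          #|[set [set v; y] | y in [set y | adj v y]]|.
  apply: eq_card => e; rewrite !inE; apply/andP/imsetP.
  - case=> /existsP[x /existsP[y /andP[Axy /eqP ->]]].
    rewrite !inE => /orP[/eqP->|/eqP->].
      by exists y; rewrite ?inE.
    exists x; first by rewrite inE Hsym.
    by apply/setP => z; rewrite !inE orbC.
  - case=> y; rewrite inE => Avy ->; split; last by rewrite !inE eqxx.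
    by apply/existsP; exists v; apply/existsP; exists y; rewrite Avy eqxx.
rewrite card_in_imset // => y y'; rewrite !inE => Hy Hy' E.
have : y \in [set v; y] by rewrite !inE eqxx orbT.
rewrite E !inE => /orP[/eqP yv|/eqP //].
by rewrite yv Hirr in Hy.
Qed.

Lemma handshake d : regular_graph adj d -> (#|edges adj| * 2 = #|V| * d)%N.
Proof.
move=> Hreg.
have E1 : (\sum_(e in edges adj) #|e| = #|edges adj| * 2)%N.
  rewrite -sum1_card big_distrl /=; apply: eq_bigr => e He.
  by rewrite edge_card2 // mul1n.
rewrite -E1.
have E2 : forall e : {set V}, #|e| = (\sum_v (v \in e))%N.
  by move=> e; rewrite -sum1_card big_mkcond.
rewrite (eq_bigr _ (fun e _ => E2 e)) exchange_big /=.
rewrite -sum1_card big_distrl /=; apply: eq_bigr => v _.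
rewrite mul1n -(Hreg v) -card_inc -sum1_card big_mkcondr /=.
apply: eq_big => // e _; by case: (v \in e).
Qed.

Local Open Scope ring_scope.

Lemma mulH (u : 'rV['F_2]_#|V|) j :
  (u *m incidence adj) 0 j = \sum_(v in enum_val j) u 0 (enum_rank v).
Proof.
rewrite !mxE (reindex (@enum_rank V)) /=; last by apply: onW_bij; exact: enum_rank_bij.
rewrite [RHS]big_mkcond; apply: eq_bigr => v _; rewrite mxE enum_rankK.
by case: (v \in enum_val j); rewrite ?mulr1 ?mulr0.
Qed.

Lemma F2_two : (2%:R : 'F_2) = 0.
Proof. by apply: pchar_Fp_0. Qed.

Lemma F2_opp (a : 'F_2) : - a = a.
Proof. by apply: oppr_pchar2; apply: pchar_Fp. Qed.

Lemma kernel_const (u : 'rV['F_2]_#|V|) :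
  connected_graph adj -> u *m incidence adj = 0 ->
  forall x y, u 0 (enum_rank x) = u 0 (enum_rank y).
Proof.
move=> Hc Hu.
have Hadj : forall x y, adj x y -> u 0 (enum_rank x) = u 0 (enum_rank y).
  move=> x y Axy.
  have He : [set x; y] \in edges adj.
    by rewrite in_edges; apply/existsP; exists x; apply/existsP; exists y; rewrite Axy eqxx.
  move/matrixP: Hu => /(_ 0 (enum_rank_in He [set x; y])).
  rewrite mulH enum_rankK_in // mxE big_setU1 /=; last first.
    rewrite inE; apply/eqP => exy; by rewrite exy Hirr in Axy.
  rewrite big_set1 => /eqP; rewrite addr_eq0 F2_opp => /eqP //.
move=> x y; case/connectP: (Hc x y) => p.
elim: p x => [|z p IH] x /=; first by move=> _ ->.
by case/andP=> Axz Hp Hl; rewrite (Hadj _ _ Axz) (IH z).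
Qed.

Lemma rank_ker : connected_graph adj -> (0 < #|V|)%N ->
  \rank (kermx (incidence adj)) = 1%N.
Proof.
move=> Hc HN.
pose x0 : V := enum_val (Ordinal HN).
set ones := const_mx 1 : 'rV['F_2]_#|V|.
have H1 : ones *m incidence adj = 0.
  apply/rowP => j; rewrite mulH mxE.
  under eq_bigr do rewrite mxE.
  rewrite sumr_const edge_card2 ?enum_valP //.
  by rewrite -mulr_natr mul1r F2_two.
have H2 : \rank ones = 1%N.
  rewrite rank_rV; suff -> : ones != 0 by []; apply/eqP => /matrixP /(_ 0 (enum_rank x0)).
  by rewrite !mxE => /eqP; rewrite oner_eq0.
have H3 : (kermx (incidence adj) <= ones)%MS.
  apply/row_subP => i.
  set w := row i (kermx (incidence adj)).
  have Hw : w *m incidence adj = 0 by apply/sub_kermxP; exact: row_sub.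
  clearbody w.
  have -> : w = w 0 (enum_rank x0) *: ones.
    apply/rowP => j; rewrite !mxE mulr1 -(enum_valK j).
    exact: kernel_const.
  exact: scalemx_sub (submx_refl _).
have H4 := mxrankS H3.
have H5 : (ones <= kermx (incidence adj))%MS by apply/sub_kermxP.
have H6 := mxrankS H5.
rewrite H2 in H4 H6; by apply/eqP; rewrite eqn_leq H4 H6.
Qed.

Lemma dim_eq : connected_graph adj -> (0 < #|V|)%N ->
  code_dim adj = (#|edges adj| - (#|V| - 1))%N.
Proof.
move=> Hc HN; rewrite /code_dim mxrank_ker mxrank_tr.
have := rank_ker Hc HN; rewrite mxrank_ker.
have := rank_leq_row (incidence adj).
rewrite /code_length; lia.
Qed.

End G.

Local Open Scope ring_scope.

Theorem mainTheorem8 (V : finType) (adj : rel V) (r t : nat) :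
  symmetric adj -> irreflexive adj ->
  (3 <= r)%N -> (2 <= t)%N ->
  connected_graph adj -> regular_graph adj r.+1 -> girth_ge adj t.+1 ->
  (((code_dim adj)%:R / (code_length adj)%:R)%R = rate_bound r t :> rat)
    <-> moore_graph adj r t.
Proof.
move=> Hsym Hirr Hr Ht Hc Hreg Hg.
have -> : moore_graph adj r t <-> #|V| = moore_number r t.
  by split; [case=> _ [] | move=> H; split; last split].
rewrite rate_bound_eq; last by lia.
set M := moore_number r t.
have HM : (0 < M)%N.
  rewrite /M /moore_number; case: ifP => _; last by lia.
  by rewrite big_nat_recl // expn0; lia.
have Hhs := @handshake V adj Hsym Hirr _ Hreg.
have rq : (3 <= r%:R :> rat) by rewrite (ler_nat _ 3).
have Mq : (1 <= M%:R :> rat) by rewrite ler1n.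
have den0 : M%:R * (r%:R + 1) != 0 :> rat by apply/lt0r_neq0; nra.
have num0 : M%:R * (r%:R - 1) + 2 != 0 :> rat by apply/lt0r_neq0; nra.
case: (posnP #|V|) => HN.
  have Hn : code_length adj = 0%N by rewrite /code_length; move: Hhs; rewrite HN; lia.
  rewrite Hn HN invr0 mulr0; split => [|HM0]; last by move: HM; rewrite -HM0.
  move/eqP; rewrite eq_sym mulf_eq0 invr_eq0 (negbTE den0) (negbTE num0) //.
rewrite (@dim_eq V adj Hirr Hc HN) /code_length in Hhs *.
set n := #|edges adj| in Hhs *.
set N := #|V| in Hhs HN *.
have Hk : ((n - (N - 1))%:R = n%:R + 1 - N%:R :> rat).
  have HNr : (N * 4 <= N * r.+1)%N by rewrite leq_mul2l; apply/orP; right; lia.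
  rewrite natrB; last by lia.
  rewrite natrB; last by lia.
  by ring.
have Hnq : n%:R = N%:R * (r%:R + 1) / 2 :> rat.
  have := congr1 (fun m => m%:R : rat) Hhs; rewrite !natrM /= => E.
  rewrite -(natr1 r) in E.
  have two : (2%:R : rat) != 0 by [].
  by rewrite -[LHS](mulfK two) E.
have Nq : (1 <= N%:R :> rat) by rewrite ler1n.
rewrite Hk Hnq; split => [H|->]; last first.
  field; apply/andP; split; [apply/lt0r_neq0; lra | apply/lt0r_neq0; lra].
move/eqP: H; rewrite eqr_div //; last by apply/lt0r_neq0; nra.
rewrite -subr_eq0 => /eqP H.
have : (r%:R + 1) * (M%:R - N%:R) = 0 :> rat by rewrite -H; field.
move/eqP; rewrite mulf_eq0 subr_eq0 eqr_nat => /orP[|/eqP //].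
by rewrite natr1 pnatr_eq0.
Qed.
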